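(* Let $K$ be a compact Hausdorff space and let $(f_n)_{n\in\omega}$ be a sequence of continuous functions $f_n\colon\operatorname{dom}(f_n)\to K$, where for each $n$ the set $\operatorname{dom}(f_n)$ is a closed subset of $K$, such that $K\times K=\bigcup_{n\in\omega}(f_n\cup f_n^{-1})$. Then $|K|\le\aleph_0$.
   Context: Functions are identified with their graphs: $f_n=\{(x,f_n(x)):x\in\operatorname{dom}(f_n)\}\subseteq K\times K$, and $f_n^{-1}=\{(f_n(x),x):x\in\operatorname{dom}(f_n)\}$. *)

(* Defs.v *)
From mathcomp Require Import all_boot all_order.
From mathcomp Require Import all_classical all_reals all_analysis.

(* Main.v *)
Require Import Defs.
From mathcomp Require Import all_boot all_order.
From mathcomp Require Import all_classical all_reals all_analysis.
Local Open Scope classical_set_scope.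

Lemma countU (T : Type) (A B : set T) : countable A -> countable B -> countable (A `|` B).
Proof.
move=> cA cB.
apply: (@sub_countable _ _ _ (\bigcup_(b in [set: bool]) (if b then A else B))).
  apply: subset_card_le => x [Ax|Bx]; [by exists true|by exists false].
apply: bigcup_countable; first exact: countableP.
by move=> [] _.
Qed.

Lemma countR_unused (T : Type) (g : nat -> T) (A : set T) : A `<=` g @` setT -> countable A.
Proof.
move=> sA; apply: (sub_countable (subset_card_le sA)).
apply: sub_countable (card_image_le _ _) _; exact: countableP.
Qed.

Lemma wcont {K : topologicalType} {D : set K} {g : K -> K} {x N} :
  {within D, continuous g} -> D x -> nbhs (g x) N -> nbhs x (fun w => D w -> N (g w)).
Proof. by move=> /subspace_continuousP h Dx Nx; exact: (h x Dx N Nx). Qed.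

Lemma fib_closed (K : topologicalType) (D : set K) (g : K -> K) x :
  hausdorff_space K -> closed D -> {within D, continuous g} ->
  closed [set z | D z /\ g z = x].
Proof.
move=> hK cD cg z cz.
have Dz : D z.
  apply: cD => B nB; have [w [[Dw _] Bw]] := cz B nB; by exists w.
split=> //; apply/eqP/negP => /negP neq.
move: hK; rewrite open_hausdorff => /(_ _ _ neq) [[A1 A2]] /= [].
rewrite !inE => A1z A2x [oA1 oA2 A0]; move/eqP: A0 => A0.
have := wcont cg Dz (open_nbhs_nbhs (conj oA1 A1z)) => nb.
have [w [[Dw gw] Hw]] := cz _ nb.
have : (A1 `&` A2) x by split=> //; rewrite -gw; exact: Hw.
by move/eqP: A0 => ->.
Qed.
Lemma cpt_cnt {K : topologicalType} (C : set K) : compact C ->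
  (forall x, C x -> exists N, nbhs x N /\ countable N) -> countable C.
Proof.
move=> cC hU; apply: contrapT => nC.
pose G := [set A : set K | exists S, countable S /\ C `\` S `<=` A].
have FG : Filter G.
  constructor.
  - by exists set0; split; [exact: countable0|].
  - move=> A B [S1 [c1 s1]] [S2 [c2 s2]]; exists (S1 `|` S2); split.
      exact: countU.
    by move=> x [Cx nS]; split; [apply: s1|apply: s2]; split=> // ?; apply: nS; [left|right].
  - by move=> P Q PQ [S [cS sS]]; exists S; split=> //; apply: subset_trans PQ.
have PG : ProperFilter G.
  constructor=> // -[S [cS sS]]; apply: nC.
  apply: sub_countable cS; apply: subset_card_le => x Cx.
  by apply: contrapT => nSx; exact: (sS x (conj Cx nSx)).
have GC : G C by exists set0; split; [exact: countable0|move=> x []].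
have [p [Cp clp]] := cC G PG GC.
have [N [Np cN]] := hU p Cp.
have GN : G (~` N) by exists N; split=> // x [].
by have [z [nz zN]] := clp _ _ GN Np.
Qed.
Definition good {K : topologicalType} (L : set K) (O : set K) := open O /\ exists z, O z /\ L z.

Lemma step1 {K : topologicalType} {L D : set K} {g : K -> K}
  (hK : hausdorff_space K) (cD : closed D) (cg : {within D, continuous g})
  (noiso : forall O, good L O -> exists y1 y2, y1 <> y2 /\ (O y1 /\ L y1) /\ (O y2 /\ L y2))
  {O Q : set K} : good L O -> good L Q -> exists O' Q',
  [/\ good L O', good L Q', O' `<=` O, Q' `<=` Q &
      forall a b, O' a -> Q' b -> ~ (D a /\ g a = b)].
Proof.
move=> [oO [x [Ox Lx]]] gQ.
have [y1 [y2 [y12 [[Qy1 Ly1] [Qy2 Ly2]]]]] := noiso Q gQ.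
have [Dx|nDx] := pselect (D x); last first.
  exists (O `&` ~` D), Q; split.
  - split; first by apply: openI => //; exact: closed_openC.
    by exists x.
  - exact: gQ.
  - by move=> ? [].
  - by [].
  - by move=> a b [_ nDa] _ [].
have [y [Qy Ly neq]] : exists y, [/\ Q y, L y & g x != y].
  have [e1|ne1] := eqVneq (g x) y1.
    exists y2; split=> //; apply/eqP => e2; apply: y12; by rewrite -e1 -e2.
  by exists y1.
move: (hK); rewrite open_hausdorff => /(_ _ _ neq) [[A1 A2]] /= [].
rewrite !inE => A1z A2y [oA1 oA2 A0]; move/eqP: A0 => A0.
have := wcont cg Dx (open_nbhs_nbhs (conj oA1 A1z)); rewrite nbhsE => -[W [oW Wx] sW].
exists (O `&` W), (Q `&` A2); split.
- by split; [exact: openI|exists x].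
- by split; [apply: openI => //; case: gQ|exists y].
- by move=> ? [].
- by move=> ? [].
move=> a b [_ Wa] [_ A2b] [Da gab].
have : (A1 `&` A2) b by split=> //; rewrite -gab; exact: sW.
by move/eqP: A0 => ->.
Qed.

Lemma shrink {K : topologicalType} {L : set K} (hK : hausdorff_space K)
  (cK : compact [set: K]) {O : set K} : good L O -> exists O', good L O' /\ closure O' `<=` O.
Proof.
move=> [oO [z [Oz Lz]]].
have [] := @compact_regular K z setT hK cK filterT O.
  exact: open_nbhs_nbhs.
move=> B nB cB; exists B°; split.
  by split; [exact: open_interior|exists z; split=> //; exact: nbhs_interior].
by apply: subset_trans cB; apply: closureS; exact: interior_subset.
Qed.

Lemma nested {K : topologicalType} {L : set K} (cL : closed L) (cK : compact [set: K])
  (O : nat -> set K) : (forall k, good L (O k)) ->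
  (forall k, closure (O k.+1) `<=` O k) -> exists x, forall k, O k x.
Proof.
move=> gO sO.
have mono : forall i j, (i <= j)%N -> O j `<=` O i.
  move=> i j /subnK <-; elim: (j - i)%N => [|m IH] //=.
  rewrite addSn; apply: subset_trans IH.
  by apply: subset_trans (sO _); exact: subset_closure.
pose G := [set A : set K | exists k, O k `&` L `<=` A].
have FG : Filter G.
  constructor.
  - by exists 0%N.
  - move=> A B [i si] [j sj]; exists (maxn i j) => x [Ox Lx]; split.
      by apply: si; split=> //; apply: mono (leq_maxl i j) _ Ox.
    by apply: sj; split=> //; apply: mono (leq_maxr i j) _ Ox.
  - by move=> P Q PQ [k sk]; exists k; apply: subset_trans PQ.
have PG : ProperFilter G.
  constructor=> // -[k sk].
  by have [_ [z [Oz Lz]]] := gO k; exact: (sk z (conj Oz Lz)).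
have [p [_ clp]] := cK G PG filterT.
exists p => k.
apply: (sO k) => B nB.
have [w [[Ow _] Bw]] := clp (O k.+1 `&` L) B (ex_intro _ k.+1 (@subset_refl _ _)) nB.
by exists w.
Qed.

Theorem theorem4p1 (K : topologicalType) (D : nat -> set K) (f : nat -> K -> K)
  (hK : hausdorff_space K) (cK : compact [set: K])
  (hD : forall n, closed (D n))
  (hf : forall n, {within D n, continuous (f n)})
  (hcover : forall x y : K, exists n : nat,
      (D n x /\ f n x = y) \/ (D n y /\ f n y = x)) :
  countable [set: K].
Proof.
pose U := fun x : K => exists N, nbhs x N /\ countable N.
pose L := fun x : K => ~ U x.
have cL : closed L.
  move=> z clz Uz; case: Uz => N [Nz cN].
  have [w [Lw Nw]] := clz _ (nbhs_interior Nz).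
  by apply: Lw; exists N.
apply: contrapT => nC.
have [z0 Lz0] : exists z, L z.
  apply: contrapT => nL; apply: nC; apply: cpt_cnt cK _ => x _.
  by apply: contrapT => nUx; apply: nL; exists x.
have cR : forall w, countable [set z | exists n, D n w /\ f n w = z].
  move=> w; apply: (@sub_countable _ _ _ ((fun n => f n w) @` setT)).
    by apply: subset_card_le => z [n [_ <-]]; exists n.
  apply: sub_countable (card_image_le _ _) _; exact: countableP.
have [noiso|iso] := pselect (forall O, good L O -> exists y1 y2,
   y1 <> y2 /\ (O y1 /\ L y1) /\ (O y2 /\ L y2)).
- have step : forall n O Q, good L O -> good L Q -> exists O' Q',
     [/\ good L O', good L Q', closure O' `<=` O, closure Q' `<=` Q &
      forall a b, O' a -> Q' b -> ~ (D n a /\ f n a = b) /\ ~ (D n b /\ f n b = a)].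
    move=> n O Q gO gQ.
    have [W1 [V1 [gO1 gQ1 sO1 sQ1 p1]]] := step1 hK (hD n) (hf n) noiso gO gQ.
    have [V2 [W2 [gQ2 gO2 sQ2 sO2 p2]]] := step1 hK (hD n) (hf n) noiso gQ1 gO1.
    have [W3 [gO3 cO3]] := shrink hK cK gO2.
    have [V3 [gQ3 cQ3]] := shrink hK cK gQ2.
    exists W3, V3; split => //.
    + by apply: subset_trans cO3 _; apply: subset_trans sO2 sO1.
    + by apply: subset_trans cQ3 _; apply: subset_trans sQ2 sQ1.
    + move=> a b Oa Qb.
      have O2a : W2 a by apply: cO3; exact: subset_closure.
      have Q2b : V2 b by apply: cQ3; exact: subset_closure.
      split; first by apply: p1; [exact: sO2|exact: sQ2].
      exact: p2.
  have [G HG] : {G : nat * (set K * set K) -> set K * set K &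
     forall s, good L s.2.1 -> good L s.2.2 ->
     [/\ good L (G s).1, good L (G s).2, closure (G s).1 `<=` s.2.1,
         closure (G s).2 `<=` s.2.2 &
      forall a b, (G s).1 a -> (G s).2 b ->
        ~ (D s.1 a /\ f s.1 a = b) /\ ~ (D s.1 b /\ f s.1 b = a)]}.
    apply: (@choice _ _ (fun s s' => good L s.2.1 -> good L s.2.2 ->
     [/\ good L s'.1, good L s'.2, closure s'.1 `<=` s.2.1,
         closure s'.2 `<=` s.2.2 &
      forall a b, s'.1 a -> s'.2 b ->
        ~ (D s.1 a /\ f s.1 a = b) /\ ~ (D s.1 b /\ f s.1 b = a)])) => -[n [ P0 Q0]].
    have [[gO gQ]|ng] := pselect (good L P0 /\ good L Q0).
      by have [ P' [Q' H]] := step n P0 Q0 gO gQ; exists (P', Q').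
    by exists (P0, Q0) => gO gQ; exfalso; exact: ng.
  pose S := fix S k := if k is k'.+1 then G (k', S k') else (@setT K, @setT K).
  have gS : forall k, good L (S k).1 /\ good L (S k).2.
    elim=> [|k [g1 g2]].
      by split; split; [exact: openT|by exists z0|exact: openT|by exists z0].
    by have [? ? _ _ _] := HG (k, S k) g1 g2.
  have [x Hx] := nested cL cK (fun k => (S k).1) (fun k => (gS k).1)
     (fun k => let: And5 _ _ c _ _ := HG (k, S k) (gS k).1 (gS k).2 in c).
  have [y Hy] := nested cL cK (fun k => (S k).2) (fun k => (gS k).2)
     (fun k => let: And5 _ _ _ c _ := HG (k, S k) (gS k).1 (gS k).2 in c).
  have [n Hn] := hcover x y.
  have [_ _ _ _ P] := HG (n, S n) (gS n).1 (gS n).2.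
  have [P1 P2] := P x y (Hx n.+1) (Hy n.+1).
  by case: Hn.
- move/existsNP: iso => [ O]; move/not_implyP => [gO niso].
  case: gO => oO [y [Oy Ly]].
  have isoy : forall z, O z -> L z -> z = y.
    move=> z Oz Lz; apply: contrapT => nzy; apply: niso; exists z, y; by split.
  have [B nB cB] := @compact_regular K y setT hK cK filterT O (open_nbhs_nbhs (conj oO Oy)).
  have [x [Bx nxy nRx]] : exists x, [/\ B x, x <> y & ~ (exists n, D n y /\ f n y = x)].
    apply: contrapT => nex; apply: Ly; exists B; split=> //.
    apply: (@sub_countable _ _ _ ([set y] `|` [set z | exists n, D n y /\ f n y = z])).
      apply: subset_card_le => z Bz; have [->|nzy] := pselect (z = y); first by left.
      by right; apply: contrapT => nR; apply: nex; exists z; split.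
    by apply: countU; [exact: countable1|exact: cR].
  apply: Ly; exists B; split=> //.
  apply: (@sub_countable _ _ _ ([set z | exists n, D n x /\ f n x = z] `|`
    \bigcup_(n in [set: nat]) (closure B `&` [set z | D n z /\ f n z = x]))).
    apply: subset_card_le => z Bz; have [n [H|H]] := hcover x z.
      by left; exists n.
    by right; exists n => //; split=> //; exact: subset_closure.
  apply: countU; first exact: cR.
  apply: bigcup_countable; first exact: countableP.
  move=> n _; apply: cpt_cnt.
    apply: (subclosed_compact _ cK) => //.
    by apply: closedI; [exact: closed_closure|exact: fib_closed].
  move=> z [clz [Dz fz]]; apply: contrapT => nUz.
  have Oz : O z by apply: cB.
  have zy := isoy z Oz nUz.
  by apply: nRx; exists n; rewrite -zy.
Qed.
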